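(* Let $c>1$ be even and let $K$ be the set partition of $S_c$ whose only part with more than one element is the set of cyclic shifts of the identity, $\{12\cdots c,\ 23\cdots c1,\ \ldots,\ c12\cdots(c-1)\}$. Then the $K$-equivalence on $S_{c+1}$ has only one nontrivial class.
   Context: Permutations are written in one-line notation as words. The order permutation (standardization) of a word $u$ of distinct positive integers of length $\ell$ is the unique $\pi\in S_\ell$ with $\pi_i<\pi_j$ iff $u_i<u_j$. The $K$-equivalence on $S_n$ is the equivalence relation generated by declaring $\phi\equiv\psi$ whenever $\phi=aub$ and $\psi=avb$ for words $a,b,u,v$ with $u,v$ of length $c$ whose order permutations lie in the same part of $K$. A class is nontrivial if it contains more than one element. *)

(* Defs.v *)
From mathcomp Require Import all_boot.
From Stdlib Require Import Relations.
Set Implicit Arguments. Unset Strict Implicit. Unset Printing Implicit Defensive.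

(* Permutations of S_n in one-line notation: words over {1..n} using each value once. *)
Definition is_perm (n : nat) (s : seq nat) : Prop := perm_eq s (iota 1 n).

(* Order permutation (standardization) of a word of distinct positive integers:
   the i-th letter is replaced by 1 + #{letters smaller than it}. *)
Definition std (u : seq nat) : seq nat :=
  map (fun x => (count (fun y => y < x) u).+1) u.

(* A set partition K of S_c is given by its "same part" relation. *)
Definition Kstep (c : nat) (sameK : seq nat -> seq nat -> Prop)
    (phi psi : seq nat) : Prop :=
  exists a b u v : seq nat,
    size u = c /\ size v = c /\ phi = a ++ u ++ b /\ psi = a ++ v ++ b /\
    sameK (std u) (std v).

Definition Kequiv (n c : nat) (sameK : seq nat -> seq nat -> Prop) :
    seq nat -> seq nat -> Prop :=
  clos_refl_sym_trans (seq nat)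
    (fun phi psi => is_perm n phi /\ is_perm n psi /\ Kstep c sameK phi psi).

Definition cyc_shift_id (c : nat) (p : seq nat) : Prop :=
  exists2 k, k < c & p = rot k (iota 1 c).

Definition Kcyc (c : nat) (p q : seq nat) : Prop :=
  p = q \/ (cyc_shift_id c p /\ cyc_shift_id c q).

(* Main.v *)
Require Import Defs.
From mathcomp Require Import all_boot zify.
From Stdlib Require Import Relations.

Lemma count_lt_mono (u : seq nat) a b : a < b ->
  count (fun y => y < a) u + count (pred1 a) u <= count (fun y => y < b) u.
Proof.
move=> ab; elim: u => [|y u IH] //=.
have: (y < a) + (y == a) <= (y < b).
  case: ltnP => ya; case: eqP => yae; case: ltnP => yb //=; lia.
move=> H; rewrite /= in IH *; lia.
Qed.

Lemma std_uniq (u v : seq nat) : perm_eq u v -> std u = std v -> u = v.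
Proof.
move=> puv e.
have sz: size u = size v by apply: perm_size.
apply: (@eq_from_nth _ 0) => // i lti.
have := congr1 (fun s => nth 0 s i) e; rewrite /std (nth_map 0) // (nth_map 0) -?sz //.
rewrite -(permP puv) => [[]] H.
have ui : nth 0 u i \in u by apply: mem_nth.
have vi : nth 0 v i \in u by rewrite (perm_mem puv); apply: mem_nth; rewrite -sz.
case: (ltngtP (nth 0 u i) (nth 0 v i)) => // [lt|lt].
- have := @count_lt_mono u _ _ lt; rewrite H.
  have : 0 < count (pred1 (nth 0 u i)) u by rewrite -has_count has_pred1.
  lia.
- have := @count_lt_mono u _ _ lt; rewrite H.
  have : 0 < count (pred1 (nth 0 v i)) u by rewrite -has_count has_pred1.
  lia.
Qed.

Lemma std_rot k s : std (rot k s) = rot k (std s).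
Proof.
rewrite /std -map_rot; apply: eq_map => x.
have p : perm_eq (rot k s) s by rewrite perm_rot. by rewrite (permP p).
Qed.

Lemma std_sorted s : sorted ltn s -> std s = iota 1 (size s).
Proof.
elim: s => [|x s IH] //= /[dup] /path_sorted ss px.
rewrite /std /= ltnn /=.
have all_gt : all (fun y => x < y) s.
  by have := order_path_min ltn_trans px.
have -> : count (fun y => y < x) s = 0.
  apply/eqP; rewrite -leqn0 leqNgt -has_count; apply/hasP => -[y ys /= yx].
  by have := allP all_gt y ys; rewrite ltnNge ltnW.
rewrite (iotaDl 1 1) -(IH ss) /std -map_comp; congr (_ :: _); apply/eq_in_map => y ys /=.
by have := allP all_gt y ys => ->.
Qed.

Definition sL (c m : nat) := rem m (iota 1 c.+1).
Definition Lb c m k := rot k (sL c m) ++ [:: m].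
Definition Rb c m k := m :: rot k (sL c m).
Notation Keq c := (Kequiv c.+1 c (Kcyc c)).

Lemma rem_cat_notin (x : nat) s1 s2 : x \notin s1 -> rem x (s1 ++ s2) = s1 ++ rem x s2.
Proof.
elim: s1 => [|y s1 IH] //=; rewrite inE negb_or => /andP [xy xs].
by rewrite eq_sym (negbTE xy) IH.
Qed.

Lemma s_split p q : rem p.+1 (iota 1 (p.+1 + q)) = iota 1 p ++ iota p.+2 q.
Proof.
rewrite addSnnS iotaD rem_cat_notin; last by rewrite mem_iota; lia.
by rewrite add1n /= eqxx.
Qed.

Lemma rot_cat_size (A B : seq nat) k : size A = k -> rot k (A ++ B) = B ++ A.
Proof. by move=> <-; rewrite rot_size_cat. Qed.

Lemma sL_sorted c m : sorted ltn (sL c m).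
Proof.
rewrite /sL rem_filter ?iota_uniq //.
apply: sorted_filter; [exact: ltn_trans | exact: iota_ltn_sorted].
Qed.

Lemma sL_size c m : 0 < m <= c.+1 -> size (sL c m) = c.
Proof. by move=> H; rewrite /sL size_rem ?size_iota // mem_iota; lia. Qed.

Lemma sL_std c m : 0 < m <= c.+1 -> std (sL c m) = iota 1 c.
Proof. by move=> H; rewrite std_sorted ?sL_sorted // sL_size. Qed.

Lemma sL_perm c m : 0 < m <= c.+1 -> perm_eq (sL c m ++ [:: m]) (iota 1 c.+1).
Proof.
move=> H; rewrite perm_catC /= perm_sym.
by apply: perm_to_rem; rewrite -[1 :: _]/(iota 1 c.+1) mem_iota; lia.
Qed.

Lemma Lb_perm c m k : 0 < m <= c.+1 -> is_perm c.+1 (Lb c m k).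
Proof.
move=> H; rewrite /is_perm /Lb; apply: (@perm_trans _ (sL c m ++ [:: m])); last exact: sL_perm.
by rewrite perm_cat2r perm_rot.
Qed.

Lemma Rb_perm c m k : 0 < m <= c.+1 -> is_perm c.+1 (Rb c m k).
Proof.
move=> H; rewrite /is_perm /Rb; apply: (@perm_trans _ (sL c m ++ [:: m])); last exact: sL_perm.
by rewrite -cat1s perm_catC perm_cat2r perm_rot.
Qed.

Lemma cyc_any c k : 0 < c -> cyc_shift_id c (rot k (iota 1 c)).
Proof.
move=> c0; case: (ltnP k c) => kc; first by exists k.
by exists 0 => //; rewrite rot0 rot_oversize // size_iota.
Qed.

Lemma Kstep_lem c a u v b : is_perm c.+1 (a ++ u ++ b) -> is_perm c.+1 (a ++ v ++ b) ->
  size u = c -> size v = c -> cyc_shift_id c (std u) -> cyc_shift_id c (std v) ->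
  Keq c (a ++ u ++ b) (a ++ v ++ b).
Proof.
move=> p1 p2 su sv cu cv; apply: rst_step; split; [|split] => //.
by exists a, b, u, v; do 4 (split => //); right.
Qed.

Lemma blockL c m k : 0 < c -> 0 < m <= c.+1 -> Keq c (Lb c m k) (Lb c m 0).
Proof.
move=> c0 H; rewrite /Lb -(cat0s (rot k _ ++ _)) -(cat0s (rot 0 _ ++ _)).
apply: Kstep_lem; rewrite ?cat0s ?Lb_perm ?size_rot ?sL_size ?std_rot ?sL_std //;
  try exact: cyc_any.
- exact: (Lb_perm c m k H).
- exact: (Lb_perm c m 0 H).
Qed.

Lemma blockR c m k : 0 < c -> 0 < m <= c.+1 -> Keq c (Rb c m k) (Rb c m 0).
Proof.
move=> c0 H; rewrite /Rb -cat1s -(cats0 (rot k _)) -(cats0 (rot 0 _)).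
apply: Kstep_lem; rewrite ?cats0 ?size_rot ?sL_size ?std_rot ?sL_std //;
  try exact: cyc_any.
- by have := Rb_perm c m k H.
- by have := Rb_perm c m 0 H.
Qed.

Lemma iotaSr m n : iota m n.+1 = iota m n ++ [:: m + n].
Proof. by rewrite -addn1 iotaD. Qed.

Lemma E1 {c p q} : c = p.+1 + q -> Rb c p.+1 p.+1 = Lb c p.+2 p.
Proof.
move=> ->; rewrite /Rb /Lb /sL.
have -> : rem p.+1 (iota 1 (p.+1 + q).+1) = (iota 1 p ++ [:: p.+2]) ++ iota p.+3 q.
  by rewrite -addnS s_split -catA.
have -> : rem p.+2 (iota 1 (p.+1 + q).+1) = iota 1 p ++ p.+1 :: iota p.+3 q.
  by rewrite -addSn s_split iotaSr -catA add1n.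
rewrite (rot_cat_size (iota 1 p ++ [:: p.+2]) _ _); last by rewrite size_cat size_iota addn1.
rewrite (rot_cat_size (iota 1 p) _ _) ?size_iota //.
by rewrite -!catA.
Qed.

Lemma E2 {c p q} : c = p.+1 + q -> Rb c p.+2 p.+1 = Lb c p.+1 p.
Proof.
move=> ->; rewrite /Rb /Lb /sL.
have -> : rem p.+2 (iota 1 (p.+1 + q).+1) = iota 1 p.+1 ++ iota p.+3 q.
  by rewrite -addSn s_split.
have -> : rem p.+1 (iota 1 (p.+1 + q).+1) = iota 1 p ++ p.+2 :: iota p.+3 q.
  by rewrite -addnS s_split.
rewrite (rot_cat_size (iota 1 p.+1) _ _) ?size_iota //.
rewrite (rot_cat_size (iota 1 p) _ _) ?size_iota //.
by rewrite iotaSr -catA add1n.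
Qed.

Lemma W {c} : 1 < c -> Rb c c.+1 1 = Lb c 1 c.-1.
Proof.
case: c => [|[|d]] // _; rewrite /Rb /Lb /sL.
have -> : rem d.+3 (iota 1 d.+3) = iota 1 d.+2.
  by rewrite -[X in iota 1 X](addn0 d.+3) s_split cats0.
have -> : rem 1 (iota 1 d.+3) = iota 2 d.+2 by [].
rewrite [iota 1 d.+2]/= (rot_cat_size [:: 1] _ _) //.
by rewrite iotaSr (rot_cat_size (iota 2 d.+1) _ _) ?size_iota // -catA.
Qed.

Lemma Ktrans {c x y z} : Keq c x y -> Keq c y z -> Keq c x z.
Proof. exact: rst_trans. Qed.
Lemma Ksym {c x y} : Keq c x y -> Keq c y x.
Proof. exact: rst_sym. Qed.
Lemma Krefl c x : Keq c x x.
Proof. exact: rst_refl. Qed.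
Lemma Keqe c x y : x = y -> Keq c x y.
Proof. by move=> ->; apply: Krefl. Qed.

Lemma conn {c} : 1 < c -> ~~ odd c -> forall m, 0 < m <= c.+1 ->
  Keq c (Lb c m 0) (Lb c 1 0) /\ Keq c (Rb c m 0) (Lb c 1 0).
Proof.
move=> c1 ev.
have c0 : 0 < c by lia.
have Q : forall m, 0 < m <= c.+1 ->
   Keq c (Lb c m 0) (if odd m then Lb c 1 0 else Rb c 1 0) /\
   Keq c (Rb c m 0) (if odd m then Rb c 1 0 else Lb c 1 0).
  elim => [//|m IH] H.
  case: m IH H => [|p] IH H; first by split; apply: Krefl.
  have [IH1 IH2] := IH ltac:(lia).
  have ce : c = p.+1 + (c - p.+1) by lia.
  rewrite [odd p.+2]/= negbK.
  split.
  - apply: Ktrans (Ksym (blockL c p.+2 p c0 H)) _.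
    rewrite -(E1 ce : Rb c p.+1 p.+1 = _); apply: Ktrans (blockR c p.+1 p.+1 c0 _) _; first lia.
    by move: IH2; rewrite [odd p.+1]/=; case: (odd p).
  - apply: Ktrans (Ksym (blockR c p.+2 p.+1 c0 H)) _.
    rewrite (E2 ce : Rb c p.+2 p.+1 = _); apply: Ktrans (blockL c p.+1 p c0 _) _; first lia.
    by move: IH1; rewrite [odd p.+1]/=; case: (odd p).
have RL : Keq c (Rb c 1 0) (Lb c 1 0).
  have [_ H2] := Q c.+1 ltac:(lia).
  rewrite /= ev in H2.
  apply: Ktrans (Ksym H2) _.
  apply: Ktrans (Ksym (blockR c c.+1 1 c0 _)) _; first lia.
  rewrite (W c1); apply: blockL => //.
move=> m H; have [H1 H2] := Q m H.
case: (odd m) H1 H2 => H1 H2; split => //.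
- exact: Ktrans H2 RL.
- exact: Ktrans H1 RL.
Qed.

Lemma is_perm_uniq n x : is_perm n x -> uniq x.
Proof. by rewrite /is_perm => /perm_uniq ->; apply: iota_uniq. Qed.

Lemma window_eq {c m k u} : 1 < c -> 0 < m <= c.+1 ->
  perm_eq (u ++ [:: m]) (iota 1 c.+1) -> std u = rot k (iota 1 c) ->
  u = rot k (sL c m).
Proof.
move=> c1 H pu su; apply: std_uniq.
  rewrite perm_sym perm_rot -(perm_cat2r [:: m]) perm_sym.
  by apply: perm_trans pu _; rewrite perm_sym; apply: sL_perm.
by rewrite su std_rot sL_std.
Qed.

Lemma active c a u b : 1 < c -> ~~ odd c -> is_perm c.+1 (a ++ u ++ b) -> size u = c ->
  cyc_shift_id c (std u) -> Keq c (a ++ u ++ b) (Lb c 1 0).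
Proof.
move=> c1 ev px su [k kc sk].
have c0 : 0 < c by lia.
have sz : size (a ++ u ++ b) = c.+1 by rewrite (perm_size px) size_iota.
rewrite !size_cat su in sz.
case: a sz px => [|m [|? ?]] /= sz px; last by exfalso; lia.
- case: b sz px => [|m [|? ?]] /= sz px; try by exfalso; lia.
  have H : 0 < m <= c.+1.
    by have := perm_mem px m; rewrite mem_cat mem_seq1 eqxx orbT mem_iota; lia.
  have -> := window_eq c1 H px sk.
  apply: Ktrans (blockL c m k c0 H) _.
  by have [] := conn c1 ev m H.
- case: b sz px => [|? ?] /= sz px; last by exfalso; lia.
  rewrite cats0 in px *.
  have H : 0 < m <= c.+1.
    by have := perm_mem px m; rewrite inE eqxx mem_iota /=; lia.
  have px' : perm_eq (u ++ [:: m]) (iota 1 c.+1).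
    by rewrite perm_catC.
  have -> := window_eq c1 H px' sk.
  apply: Ktrans (blockR c m k c0 H) _.
  by have [] := conn c1 ev m H.
Qed.

Lemma triv_eq n a u v b : is_perm n (a ++ u ++ b) -> is_perm n (a ++ v ++ b) ->
  std u = std v -> u = v.
Proof.
rewrite /is_perm => p1 p2 e; apply: std_uniq => //.
have : perm_eq (a ++ u ++ b) (a ++ v ++ b) by apply: perm_trans p1 _; rewrite perm_sym.
by rewrite perm_cat2l perm_cat2r.
Qed.

Lemma cases c x y : 1 < c -> ~~ odd c -> Keq c x y ->
  x = y \/ (Keq c x (Lb c 1 0) /\ Keq c y (Lb c 1 0)).
Proof.
move=> c1 ev; elim => {x y}.
- move=> x y [px [py [a [b [u [v [su [sv [ex [ey K]]]]]]]]]].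
  subst x y.
  case: K => [e | [cu cv]].
    by left; rewrite (triv_eq _ _ _ _ _ px py e).
  by right; split; apply: active.
- by move=> x; left.
- by move=> x y _ [e | [h1 h2]]; [left | right].
- move=> x y z _ [e1 | [h1 h2]] _ [e2 | [h3 h4]].
  + by left; rewrite e1 e2.
  + by right; rewrite e1.
  + by right; rewrite -e2.
  + by right.
Qed.

Theorem corollary2p6 (c : nat) :
  1 < c -> ~~ odd c ->
  (exists phi psi : seq nat,
     is_perm c.+1 phi /\ is_perm c.+1 psi /\ phi <> psi /\
     Kequiv c.+1 c (Kcyc c) phi psi) /\
  (forall x y z w : seq nat,
     is_perm c.+1 x -> is_perm c.+1 y -> is_perm c.+1 z -> is_perm c.+1 w ->
     x <> y -> Kequiv c.+1 c (Kcyc c) x y ->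
     z <> w -> Kequiv c.+1 c (Kcyc c) z w ->
     Kequiv c.+1 c (Kcyc c) x z).
Proof.
move=> c1 ev; split.
- have c0 : 0 < c by lia.
  have H1 : 0 < 1 <= c.+1 by lia.
  exists (Lb c 1 0), (Lb c 1 1); split; first exact: Lb_perm.
  split; first exact: Lb_perm.
  split; last exact: Ksym (blockL c 1 1 c0 H1).
  rewrite /Lb /sL; case: c c1 {ev c0 H1} => [|[|d]] // _.
  rewrite /= /rot /=.
- move=> x y z w _ _ _ _ nxy Kxy nzw Kzw.
  have [//|[h1 _]] := cases _ _ _ c1 ev Kxy.
  have [//|[h3 _]] := cases _ _ _ c1 ev Kzw.
  exact: Ktrans h1 (Ksym h3).
Qed.
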